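(* Consider a drone cellular network in which drone base stations (DBSs) lie in the plane $z=h$ (the DBS plane), $h>0$, and a typical user equipment (UE) is located at the origin $\mathbf{o}=(0,0,0)$; let $\mathbf{o}'=(0,0,h)$. Suppose every DBS moves in the DBS plane along a straight line, each in its own direction, and all DBSs move with the same constant speed $v>0$ (same speed model, SSM). At each time $t$ the serving DBS of the typical UE is the DBS closest to the UE (equivalently, the DBS whose position minimizes the distance to $\mathbf{o}'$). Let $D_0$ be the serving DBS at time $t=t_0$, and suppose that a handover occurs at time $t=t_1>t_0$, after which the DBS $D_1$ becomes the serving DBS. Then $D_0$ cannot become the serving DBS again at any time $t>t_1$.
   Context: A handover occurs when the serving DBS (the nearest DBS to the typical UE) changes. *)

(* Defs.v *)
From mathcomp Require Import all_boot all_order all_algebra.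
Set Implicit Arguments. Unset Strict Implicit. Unset Printing Implicit Defensive.
Import Order.TTheory GRing.Theory Num.Theory.
Local Open Scope ring_scope.

(* Same speed model.  DBS i starts at (x1 i, x2 i, h) at time 0 and moves in the
   plane z = h along the unit direction (u1 i, u2 i) with common speed v. *)
Definition dbs_pos1 (R : rcfType) (I : Type) (x1 u1 : I -> R) (v : R) (i : I) (t : R) : R :=
  x1 i + v * t * u1 i.

Definition dbs_dist (R : rcfType) (I : Type) (h v : R) (x1 x2 u1 u2 : I -> R)
  (i : I) (t : R) : R :=
  Num.sqrt ((dbs_pos1 x1 u1 v i t) ^+ 2 + (dbs_pos1 x2 u2 v i t) ^+ 2 + h ^+ 2).

Definition serving (R : rcfType) (I : Type) (h v : R) (x1 x2 u1 u2 : I -> R)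
  (t : R) (i : I) : Prop :=
  forall j : I, j <> i -> dbs_dist h v x1 x2 u1 u2 i t < dbs_dist h v x1 x2 u1 u2 j t.

(* Main.v *)
Require Import Defs.
From mathcomp Require Import all_boot all_order all_algebra.
From mathcomp Require Import ring lra.
Import Order.TTheory GRing.Theory Num.Theory.
Local Open Scope ring_scope.

Definition Fsq {R : rcfType} {I : Type} (h v : R) (x1 x2 u1 u2 : I -> R) (i : I) (t : R) : R :=
  (dbs_pos1 x1 u1 v i t) ^+ 2 + (dbs_pos1 x2 u2 v i t) ^+ 2 + h ^+ 2.

Lemma Fsq_lt {R : rcfType} {I : Type} (h v : R) (x1 x2 u1 u2 : I -> R) i j t :
  dbs_dist h v x1 x2 u1 u2 i t < dbs_dist h v x1 x2 u1 u2 j t ->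
  Fsq h v x1 x2 u1 u2 i t < Fsq h v x1 x2 u1 u2 j t.
Proof.
rewrite /dbs_dist -/(Fsq _ _ _ _ _ _ i t) -/(Fsq _ _ _ _ _ _ j t) => H.
rewrite ltNge; apply/negP => /ler_wsqrtr; by rewrite leNgt H.
Qed.

Arguments Fsq_lt {R I h v x1 x2 u1 u2 i j t}.

Lemma Fsq_aff {R : rcfType} {I : Type} (h v : R) (x1 x2 u1 u2 : I -> R) i t :
  u1 i ^+ 2 + u2 i ^+ 2 = 1 ->
  Fsq h v x1 x2 u1 u2 i t =
  (x1 i ^+ 2 + x2 i ^+ 2 + h ^+ 2) + t * (2 * v * (x1 i * u1 i + x2 i * u2 i))
  + (v * t) ^+ 2.
Proof.
move=> hu.
have -> : Fsq h v x1 x2 u1 u2 i t =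
  (x1 i ^+ 2 + x2 i ^+ 2 + h ^+ 2) + t * (2 * v * (x1 i * u1 i + x2 i * u2 i))
  + (v * t) ^+ 2 * (u1 i ^+ 2 + u2 i ^+ 2).
  rewrite /Fsq /dbs_pos1; ring.
by rewrite hu mulr1.
Qed.

Theorem lemma2 (R : rcfType) (I : Type) (h v : R) (x1 x2 u1 u2 : I -> R)
  (D0 D1 : I) (t0 t1 : R) :
  0 < h -> 0 < v ->
  (forall i, u1 i ^+ 2 + u2 i ^+ 2 = 1) ->
  t0 < t1 ->
  (* D0 is the serving DBS from t0 until the handover time t1 *)
  (forall t, t0 <= t < t1 -> serving h v x1 x2 u1 u2 t D0) ->
  (* handover at t1: right after t1 the serving DBS is D1 <> D0 *)
  D1 <> D0 ->
  (exists2 eps : R, 0 < eps &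
     forall t, t1 < t < t1 + eps -> serving h v x1 x2 u1 u2 t D1) ->
  forall t, t1 < t -> ~ serving h v x1 x2 u1 u2 t D0.
Proof.
move=> hh hv hu ht01 hS0 hne [eps heps hS1] t ht hst.
have hne' : D0 <> D1 by move=> e; apply: hne.
have [tlt|tge] := ltP t (t1 + eps).
  have A := hS1 t (andb_true_intro (conj ht tlt)) D0 hne'.
  have B := hst D1 hne.
  by move: (lt_trans A B); rewrite ltxx.
set s := t1 + eps / 2.
have hs1 : t1 < s < t1 + eps by apply/andP; split; rewrite /s; lra.
have A := Fsq_lt (hS1 s hs1 D0 hne').
have B := Fsq_lt (hS0 t0 (andb_true_intro (conj (lexx t0) ht01)) D1 hne).
have C := Fsq_lt (hst D1 hne).
move: A B C; rewrite !Fsq_aff //.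
set C0 := (_ + _ + h ^+ 2); set C1 := (_ + _ + h ^+ 2).
set K0 := 2 * v * _; set K1 := 2 * v * _.
move=> A B C.
have hst0 : t0 < s by rewrite /s; lra.
have hts : s <= t by rewrite /s; lra.
set a := (C1 + t0 * K1) - (C0 + t0 * K0).
set b := (C1 + s * K1) - (C0 + s * K0).
set c := (C1 + t * K1) - (C0 + t * K0).
have ha : a < 0 by rewrite /a; lra.
have hb : 0 < b by rewrite /b; lra.
have hc : c < 0 by rewrite /c; lra.
have id : c * (s - t0) = b * (t - t0) - a * (t - s) by rewrite /a /b /c; ring.
have : 0 < c * (s - t0).
  rewrite id.
  have : 0 < b * (t - t0) by apply: mulr_gt0; lra.
  have : 0 <= - a * (t - s) by apply: mulr_ge0; lra.
  rewrite mulNr; lra.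
have hs0 : 0 < s - t0 by lra.
move=> H; move: (pmulr_lgt0 c hs0); rewrite H => /esym Hc; lra.
Qed.
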